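(* Assume $b_1<n^*$ and $b_2<m^*$, and let $\epsilon=b_1b_2\bigl(\frac{1}{\max\{b_1,m^*\}}-\frac{1}{n^*}\bigr)$. For every minimum set cover $S^{\min}$ (a set cover of size $n^*$) and every maximum set packing $T^{\max}$ (a set packing of size $m^*$): (i.a) $(\sigma^1(S^{\min},b_1),\sigma^2(T^{\max},b_2))$ is an $\epsilon$-Nash equilibrium of $\Gamma(b_1,b_2)$; (i.b) for every Nash equilibrium $(\sigma^{1*},\sigma^{2*})$ of $\Gamma(b_1,b_2)$ and each $j\in\{1,2\}$, $|U_j(\sigma^1(S^{\min},b_1),\sigma^2(T^{\max},b_2))-U_j(\sigma^{1*},\sigma^{2*})|\le\epsilon$; (ii) $\min_{\sigma^2} r(\sigma^1(S^{\min},b_1),\sigma^2)=\frac{b_1}{n^*}$, the minimum being over all $\sigma^2\in\Delta(\mathcal A_2)$ supported on nonempty attack plans, and for every Nash equilibrium $(\sigma^{1*},\sigma^{2*})$ of $\Gamma(b_1,b_2)$, $\frac{b_1}{n^*}\ge\frac{\max\{b_1,m^*\}}{n^*}\,r(\sigma^{1*},\sigma^{2*})$.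
   Context: Detection model: finite nonempty sets $\mathcal V$, $\mathcal E$, monitoring sets $\mathcal C_i\subseteq\mathcal E$ ($i\in\mathcal V$) with every $e\in\mathcal E$ in some $\mathcal C_i$; $\mathcal C_S=\bigcup_{i\in S}\mathcal C_i$; $F(S,T)=|\mathcal C_S\cap T|$. Set cover: $S\subseteq\mathcal V$ with $\mathcal C_S=\mathcal E$; $n^*$ = minimum size of a set cover. Set packing: $T\subseteq\mathcal E$ with $|\mathcal C_i\cap T|\le1$ for all $i$; $m^*$ = maximum size of a set packing. Game $\Gamma(b_1,b_2)$ ($b_1,b_2$ positive integers): $\mathcal A_1=\{S\subseteq\mathcal V:|S|\le b_1\}$, $\mathcal A_2=\{T\subseteq\mathcal E:|T|\le b_2\}$; mixed strategies $\sigma^1\in\Delta(\mathcal A_1)$, $\sigma^2\in\Delta(\mathcal A_2)$ (independent); payoffs $U_1=\mathbb E[F(S,T)]$, $U_2=\mathbb E[|T|]-\mathbb E[F(S,T)]$. Nash equilibrium as usual; for $\epsilon\ge0$ an $\epsilon$-Nash equilibrium is a profile $(\sigma^{1\prime},\sigma^{2\prime})$ with $U_1(\sigma^{1\prime},\sigma^{2\prime})\ge U_1(\sigma^1,\sigma^{2\prime})-\epsilon$ for all $\sigma^1$ and $U_2(\sigma^{1\prime},\sigma^{2\prime})\ge U_2(\sigma^{1\prime},\sigma^2)-\epsilon$ for all $\sigma^2$. Expected detection rate: $r(\sigma)=\mathbb E[F(S,T)/|T|]$ for profiles whose attack strategy is supported on nonempty sets. Cyclic strategies: for $S=\{i_1,\dots,i_n\}$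 (fixed enumeration) with $n\ge b_1$, $S^k=\{i_k,\dots,i_{k+b_1-1}\}$ with indices cyclic mod $n$, $k=1,\dots,n$, and $\sigma^1(S,b_1)$ puts probability $1/n$ on each $S^k$; for $T=\{e_1,\dots,e_m\}$ with $m\ge b_2$, $T^l=\{e_l,\dots,e_{l+b_2-1}\}$ cyclically and $\sigma^2(T,b_2)$ puts probability $1/m$ on each $T^l$. *)

(* Defs.v *)
From HB Require Import structures.
From mathcomp Require Import all_boot all_order all_algebra.
Set Implicit Arguments. Unset Strict Implicit. Unset Printing Implicit Defensive.
Import Order.TTheory GRing.Theory Num.Theory.
Local Open Scope ring_scope.

Section Model.
Variables (V E : finType) (C : V -> {set E}).

Definition CS (S : {set V}) : {set E} := \bigcup_(i in S) C i.

Definition F (S : {set V}) (T : {set E}) : nat := #|CS S :&: T|.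

Definition is_cover (S : {set V}) : Prop := CS S = [set: E].
Definition coverb (S : {set V}) : bool := CS S == [set: E].

Definition is_packing (T : {set E}) : Prop := forall i : V, (#|C i :&: T| <= 1)%N.
Definition packingb (T : {set E}) : bool := [forall i : V, (#|C i :&: T| <= 1)%N].

(* n^* : minimum size of a set cover (meaningful when [set: V] is a cover) *)
Definition nstar : nat := #|[arg min_(S < [set: V] | coverb S) #|S| ]|.
(* m^* : maximum size of a set packing (set0 is always a packing) *)
Definition mstar : nat := #|[arg max_(T > set0 | packingb T) #|T| ]|.
End Model.

Section Game.
Variable R : realFieldType.

Definition mixed (A : finType) (b : nat) (s : {set A} -> R) : Prop :=
  [/\ forall X, 0 <= s X, \sum_(X : {set A}) s X = 1
    & forall X, s X != 0 -> (#|X| <= b)%N].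

Variables (V E : finType) (C : V -> {set E}).

Definition U1 (s1 : {set V} -> R) (s2 : {set E} -> R) : R :=
  \sum_(S : {set V}) \sum_(T : {set E}) s1 S * s2 T * (F C S T)%:R.

Definition U2 (s1 : {set V} -> R) (s2 : {set E} -> R) : R :=
  \sum_(S : {set V}) \sum_(T : {set E}) s1 S * s2 T * ((#|T|)%:R - (F C S T)%:R).

Definition epsNash (b1 b2 : nat) (eps : R) (s1 : {set V} -> R) (s2 : {set E} -> R) : Prop :=
  [/\ mixed b1 s1, mixed b2 s2,
      (forall s1', mixed b1 s1' -> U1 s1' s2 <= U1 s1 s2 + eps)
    & (forall s2', mixed b2 s2' -> U2 s1 s2' <= U2 s1 s2 + eps)].

Definition Nash (b1 b2 : nat) := epsNash b1 b2 0.

Definition rate (s1 : {set V} -> R) (s2 : {set E} -> R) : R :=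
  \sum_(S : {set V}) \sum_(T : {set E}) s1 S * s2 T * ((F C S T)%:R / (#|T|)%:R).

Definition nonempty_support (s2 : {set E} -> R) : Prop :=
  forall T, s2 T != 0 -> T != set0.
End Game.

(* Cyclic strategy: for an enumeration s = [x_0; ...; x_{n-1}] of a set,
   the k-th window is {x_k, ..., x_{k+b-1}} (indices mod n), k = 0..n-1;
   the strategy gives probability 1/n to each window (summing if windows coincide). *)
Definition window (A : finType) (s : seq A) (b k : nat) : {set A} :=
  [set x in take b (rot k s)].

Definition cyc (R : realFieldType) (A : finType) (s : seq A) (b : nat) (X : {set A}) : R :=
  (\sum_(k < size s) (X == window s b k : nat))%N%:R / (size s)%:R.

(* Main.v *)
Require Import Defs.
From HB Require Import structures.
From mathcomp Require Import all_boot all_order all_algebra.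
From mathcomp Require Import zify ring lra.
Import Order.TTheory GRing.Theory Num.Theory.
Set Implicit Arguments. Unset Strict Implicit. Unset Printing Implicit Defensive.

Section Comb.
Variable A : finType.

Lemma window_sub (s : seq A) b k : window s b k \subset [set x in s].
Proof.
apply/subsetP => x; rewrite !inE => /mem_take; by rewrite mem_rot.
Qed.

Lemma card_window_le (s : seq A) b k : (#|window s b k| <= b)%N.
Proof.
rewrite /window cardsE; apply: leq_trans (card_size _) _.
by rewrite size_take_min geq_minl.
Qed.

Lemma card_window (s : seq A) b k : uniq s -> (b <= size s)%N -> #|window s b k| = b.
Proof.
move=> us bs; rewrite /window cardsE; move/card_uniqP: (take_uniq b (etrans (rot_uniq k s) us)) ->.
by rewrite size_takel // size_rot.
Qed.

Lemma sum_lt_ord n b : (\sum_(k < n) (k < b) = minn b n)%N.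
Proof.
elim: n => [|n IH]; first by rewrite big_ord0; lia.
rewrite big_ord_recr /= IH; case: ltnP => H; lia.
Qed.

Lemma count_window (s : seq A) b x : uniq s -> x \in s -> (b <= size s)%N ->
  (\sum_(k < size s) (x \in window s b k) = b)%N.
Proof.
move=> us xs bs.
set n := size s; set i := index x s.
have iltn : (i < n)%N by rewrite index_mem.
pose jf k := if (k <= i)%N then (i - k)%N else (i + n - k)%N.
have jfn : forall k, (k < n)%N -> (jf k < n)%N.
  by move=> k kn; rewrite /jf; case: ifP; lia.
have key : forall k, (k < n)%N -> (x \in window s b k) = (jf k < b)%N.
  move=> k kn; rewrite /window inE in_take ?mem_rot //.
  have -> : index x (rot k s) = jf k; last by [].
  have nthE : nth x (rot k s) (jf k) = x.
    rewrite /rot nth_cat size_drop -/n /jf.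
    case: (leqP k i) => ki.
      rewrite ifT; last lia.
      by rewrite nth_drop subnKC // nth_index.
    rewrite ifF; last lia.
    rewrite nth_take; last lia.
    have -> : (i + n - k - (n - k) = i)%N by lia.
    by rewrite nth_index.
  rewrite -{1}nthE index_uniq //; first by rewrite size_rot; apply: jfn.
  by rewrite rot_uniq.
pose h (k : 'I_n) : 'I_n := Ordinal (jfn k (ltn_ord k)).
have hinj : injective h.
  move=> k1 k2 /(congr1 val) /=; rewrite /jf => H; apply/val_inj => /=.
  have := ltn_ord k1; have := ltn_ord k2.
  move: H; case: ifP; case: ifP; lia.
rewrite (eq_bigr (fun k : 'I_n => nat_of_bool (h k < b)%N)); last first.
  by move=> k _; rewrite key.
rewrite -(reindex_inj (P := xpredT) (F := fun k : 'I_n => nat_of_bool (k < b)%N) hinj).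
by rewrite sum_lt_ord; lia.
Qed.
End Comb.

Local Open Scope ring_scope.

Section Model2.
Variables (V E : finType) (C : V -> {set E}).

Lemma inCS (S : {set V}) e : reflect (exists2 i, i \in S & e \in C i) (e \in CS C S).
Proof. by apply: (iffP bigcupP) => [[i Hi He]|[i Hi He]]; exists i. Qed.

Lemma packing_card (P : {set E}) (S : {set V}) :
  is_packing C P -> (#|CS C S :&: P| <= #|S|)%N.
Proof.
move=> hP; case: (set_0Vmem S) => [->|[i0 _]].
  rewrite /CS big_set0 set0I cards0; done.
pose f e := odflt i0 [pick i in S | e \in C i].
have fP : forall e, e \in CS C S -> (f e \in S) && (e \in C (f e)).
  move=> e /inCS [i Hi He]; rewrite /f; case: pickP => [j /andP [-> ->] //|].
  by move/(_ i); rewrite Hi He.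
rewrite -(card_in_imset (f := f)); last first.
  move=> e1 e2; rewrite !inE => /andP [h1 p1] /andP [h2 p2] feq.
  have /card_le1_eqP H := hP (f e1).
  have i1 : e1 \in C (f e1) :&: P by rewrite inE p1 andbT; case/andP: (fP _ h1).
  have i2 : e2 \in C (f e1) :&: P by rewrite inE p2 andbT feq; case/andP: (fP _ h2).
  by have := H _ _ i1 i2.
apply: subset_leq_card; apply/subsetP => y /imsetP [e]; rewrite inE => /andP [h _] ->.
by case/andP: (fP _ h).
Qed.

Lemma cover_setT : (forall e : E, exists i : V, e \in C i) -> coverb C [set: V].
Proof.
move=> h; apply/eqP/setP => e; rewrite inE; apply/inCS.
by have [i Hi] := h e; exists i.
Qed.

Lemma nstar_min (S : {set V}) : (forall e : E, exists i : V, e \in C i) ->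
  coverb C S -> (nstar C <= #|S|)%N.
Proof.
move=> h cS; rewrite /nstar.
by case: (arg_minnP (fun X : {set V} => #|X|) (cover_setT h)) => S0 _ /(_ S cS).
Qed.

End Model2.


Section Gen.
Variable R : realFieldType.
Variable A : finType.

Lemma sum_pred1 (Y : {set A}) (c : R) (f : {set A} -> R) :
  \sum_Z (if Z == Y then c else 0) * f Z = c * f Y.
Proof.
rewrite (bigD1 Y) //= eqxx big1 ?addr0 // => Z /negPf ->; by rewrite mul0r.
Qed.

Lemma sum_if (Y : {set A}) (c : R) :
  \sum_Z (if Z == Y then c else 0) = c.
Proof. by rewrite (bigD1 Y) //= eqxx big1 ?addr0 // => Z /negPf ->. Qed.

Lemma avg_le b (s : {set A} -> R) (f : {set A} -> R) c :
  mixed b s -> (forall X, s X != 0 -> f X <= c) -> \sum_X s X * f X <= c.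
Proof.
case=> s0 s1 _ h; rewrite -[c]mul1r -s1 mulr_suml; apply: ler_sum => X _.
have [->|nz] := eqVneq (s X) 0; first by rewrite !mul0r.
by apply: ler_wpM2l => //; apply: h.
Qed.

Lemma avg_ge b (s : {set A} -> R) (f : {set A} -> R) c :
  mixed b s -> (forall X, s X != 0 -> c <= f X) -> c <= \sum_X s X * f X.
Proof.
case=> s0 s1 _ h; rewrite -[c]mul1r -s1 mulr_suml; apply: ler_sum => X _.
have [->|nz] := eqVneq (s X) 0; first by rewrite !mul0r.
by apply: ler_wpM2l => //; apply: h.
Qed.

Lemma dev b (s : {set A} -> R) (f : {set A} -> R) (X Y : {set A}) :
  mixed b s ->
  (forall s', mixed b s' -> \sum_Z s' Z * f Z <= \sum_Z s Z * f Z + 0) ->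
  s X != 0 -> (#|Y| <= b)%N -> f Y <= f X.
Proof.
move=> ms; case: (ms) => s0 s1 ssup h nz hY.
have [<-|neq] := eqVneq Y X; first by [].
pose s' Z := s Z + (if Z == Y then s X else 0) - (if Z == X then s X else 0).
have ms' : mixed b s'.
  split.
  - move=> Z; rewrite /s'; case: (eqVneq Z X) => [->|nX].
      by rewrite eq_sym (negPf neq) addr0 subrr.
    rewrite subr0; case: ifP => _; last by rewrite addr0.
    by rewrite addr_ge0.
  - by rewrite /s' sumrB big_split /= s1 !sum_if addrK.
  - move=> Z; case: (eqVneq Z Y) => [-> //|nY].
    case: (eqVneq Z X) => [-> _|nX]; first by apply: ssup.
    by rewrite /s' (negPf nY) (negPf nX) addr0 subr0; apply: ssup.
have := h s' ms'.
have -> : \sum_Z s' Z * f Z = \sum_Z s Z * f Z + s X * f Y - s X * f X.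
  rewrite /s'; under eq_bigr do rewrite mulrBl mulrDl.
  by rewrite sumrB big_split /= !sum_pred1.
rewrite addr0 -addrA gerDl subr_le0 => H.
have sp : 0 < s X by rewrite lt0r nz s0.
by rewrite -(ler_pM2l sp).
Qed.

Lemma absB_le (x y a b : R) : a <= x -> x <= b -> a <= y -> y <= b -> `|x - y| <= b - a.
Proof.
move=> h1 h2 h3 h4; rewrite ler_norml; apply/andP; split; lra.
Qed.

End Gen.


Section Game3.
Variable R : realFieldType.
Variables (V E : finType) (C : V -> {set E}).

Definition pp (s1 : {set V} -> R) (e : E) : R := \sum_S s1 S * (e \in CS C S)%:R.
Definition qq (s2 : {set E} -> R) (e : E) : R := \sum_T s2 T * (e \in T)%:R.
Definition hh (s2 : {set E} -> R) (S : {set V}) : R := \sum_e (e \in CS C S)%:R * qq s2 e.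
Definition gg (s1 : {set V} -> R) (T : {set E}) : R := \sum_e pp s1 e * (e \in T)%:R.

Lemma card_sumR (T : {set E}) : (#|T|)%:R = \sum_e (e \in T)%:R :> R.
Proof.
rewrite -sum1_card natr_sum big_mkcond /=; apply: eq_bigr => e _.
by case: (e \in T).
Qed.

Lemma natF (S : {set V}) (T : {set E}) : (F C S T)%:R = \sum_e (e \in CS C S)%:R * (e \in T)%:R :> R.
Proof.
rewrite /F card_sumR; apply: eq_bigr => e _; rewrite inE.
by case: (e \in CS C S); case: (e \in T); rewrite /= ?mulr1 ?mul0r ?mulr0.
Qed.

Lemma U1_h (s1 : {set V} -> R) (s2 : {set E} -> R) : U1 C s1 s2 = \sum_S s1 S * hh s2 S.
Proof.
rewrite /U1; apply: eq_bigr => S _; rewrite /hh /qq mulr_sumr.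
under eq_bigr do rewrite natF mulr_sumr.
rewrite exchange_big; apply: eq_bigr => e _.
rewrite mulr_sumr mulr_sumr; apply: eq_bigr => T _; ring.
Qed.

Lemma U1_g (s1 : {set V} -> R) (s2 : {set E} -> R) : U1 C s1 s2 = \sum_T s2 T * gg s1 T.
Proof.
rewrite /U1 exchange_big; apply: eq_bigr => T _; rewrite /gg /pp mulr_sumr.
under eq_bigr do rewrite natF mulr_sumr.
rewrite exchange_big; apply: eq_bigr => e _.
rewrite mulr_suml mulr_sumr; apply: eq_bigr => S _; ring.
Qed.

Lemma U1_pq (s1 : {set V} -> R) (s2 : {set E} -> R) : U1 C s1 s2 = \sum_e pp s1 e * qq s2 e.
Proof.
rewrite U1_h /hh /pp.
under eq_bigr do rewrite mulr_sumr.
rewrite exchange_big; apply: eq_bigr => e _.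
rewrite mulr_suml; apply: eq_bigr => S _; ring.
Qed.

Lemma sizeq (s2 : {set E} -> R) : \sum_T s2 T * (#|T|)%:R = \sum_e qq s2 e.
Proof.
rewrite /qq exchange_big; apply: eq_bigr => T _; by rewrite card_sumR mulr_sumr.
Qed.

Lemma U2_E (s1 : {set V} -> R) (s2 : {set E} -> R) : \sum_S s1 S = 1 -> U2 C s1 s2 = \sum_e qq s2 e - U1 C s1 s2.
Proof.
move=> h; rewrite /U2 /U1 -sizeq.
have -> : \sum_T s2 T * (#|T|)%:R = \sum_S \sum_T s1 S * s2 T * (#|T|)%:R.
  rewrite -[LHS]mul1r -h mulr_suml; apply: eq_bigr => S _; rewrite mulr_sumr.
  by apply: eq_bigr => T _; ring.
rewrite -sumrB; apply: eq_bigr => S _; rewrite -sumrB; apply: eq_bigr => T _; ring.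
Qed.

Lemma U2_g (s1 : {set V} -> R) (s2 : {set E} -> R) : \sum_S s1 S = 1 ->
  U2 C s1 s2 = \sum_T s2 T * ((#|T|)%:R - gg s1 T).
Proof.
move=> h; rewrite U2_E // U1_g -sizeq -sumrB; apply: eq_bigr => T _; ring.
Qed.

Lemma rate_g (s1 : {set V} -> R) (s2 : {set E} -> R) : rate C s1 s2 = \sum_T s2 T * (gg s1 T / (#|T|)%:R).
Proof.
rewrite /rate exchange_big; apply: eq_bigr => T _.
have -> : gg s1 T = \sum_S s1 S * (F C S T)%:R.
  rewrite /gg /pp; under eq_bigr do rewrite mulr_suml.
  rewrite exchange_big; apply: eq_bigr => S _; rewrite natF mulr_sumr.
  by apply: eq_bigr => e _; ring.
rewrite mulr_suml mulr_sumr; apply: eq_bigr => S _; ring.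
Qed.

Lemma pp_ge0 b (s1 : {set V} -> R) e : mixed b s1 -> 0 <= pp s1 e.
Proof. case=> h _ _; apply: sumr_ge0 => S _; apply: mulr_ge0 => //. Qed.
Lemma qq_ge0 b (s2 : {set E} -> R) e : mixed b s2 -> 0 <= qq s2 e.
Proof. case=> h _ _; apply: sumr_ge0 => S _; apply: mulr_ge0 => //. Qed.
Lemma pp_le1 b (s1 : {set V} -> R) e : mixed b s1 -> pp s1 e <= 1.
Proof.
case=> h h1 _; rewrite -h1; apply: ler_sum => S _.
by apply: ler_piMr => //; case: (_ \in _).
Qed.
Lemma qq_le1 b (s2 : {set E} -> R) e : mixed b s2 -> qq s2 e <= 1.
Proof.
case=> h h1 _; rewrite -h1; apply: ler_sum => S _.
by apply: ler_piMr => //; case: (_ \in _).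
Qed.
Lemma sumq_le b (s2 : {set E} -> R) : mixed b s2 -> \sum_e qq s2 e <= b%:R.
Proof.
move=> ms; rewrite -sizeq; apply: (avg_le ms) => X nz.
by rewrite ler_nat; case: ms => _ _ /(_ X nz).
Qed.

End Game3.


Section Cyc.
Variable R : realFieldType.
Variable A : finType.

Lemma cyc_avg (s : seq A) b (f : {set A} -> R) :
  \sum_X cyc R s b X * f X = (\sum_(k < size s) f (window s b k)) / (size s)%:R.
Proof.
rewrite /cyc mulr_suml.
under eq_bigr do rewrite natr_sum !mulr_suml.
rewrite exchange_big; apply: eq_bigr => k _.
rewrite (bigD1 (window s b k)) //= eqxx big1 ?addr0; first by rewrite mul1r mulrC.
by move=> X /negPf ->; rewrite !mul0r.
Qed.

Lemma mixed_cyc (s : seq A) b : (0 < size s)%N -> mixed b (cyc R s b).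
Proof.
move=> sp; split.
- by move=> X; rewrite /cyc divr_ge0 ?ler0n.
- transitivity (\sum_X cyc R s b X * 1); first by apply: eq_bigr => X _; rewrite mulr1.
  rewrite cyc_avg sumr_const card_ord -[1 *+ _]/(_%:R) divff //.
  by rewrite pnatr_eq0 -lt0n.
- move=> X; rewrite /cyc mulf_eq0 negb_or pnatr_eq0 => /andP [nz _].
  have [k /eqP ->] : exists k : 'I_(size s), X == window s b k.
    apply/existsP; apply: contraNT nz => /existsPn H.
    by apply/eqP; apply: big1 => k _; rewrite (negPf (H k)).
  exact: card_window_le.
Qed.

End Cyc.


Section CycG.
Variable R : realFieldType.
Variables (V E : finType) (C : V -> {set E}).

Lemma pp_cyc (sS : seq V) b e :
  pp C (cyc R sS b) e = (\sum_(k < size sS) (e \in CS C (window sS b k)))%:R / (size sS)%:R.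
Proof. by rewrite /pp cyc_avg natr_sum. Qed.

Lemma pp_cyc_ge (sS : seq V) b e : uniq sS -> is_cover C [set x in sS] ->
  (b <= size sS)%N -> b%:R / (size sS)%:R <= pp C (cyc R sS b) e.
Proof.
move=> us cov bs; rewrite pp_cyc ler_wpM2r ?invr_ge0 ?ler0n // ler_nat.
have : e \in CS C [set x in sS] by rewrite cov inE.
case/inCS => i; rewrite inE => iS ei.
rewrite -{1}(count_window us iS bs); apply: leq_sum => k _.
case: (boolP (i \in window sS b k)) => // iw.
by have -> : e \in CS C (window sS b k) by apply/inCS; exists i.
Qed.

Lemma pp_cyc_priv (sS : seq V) b e i : uniq sS -> i \in sS -> e \in C i ->
  (forall j, j \in sS -> e \in C j -> j = i) ->
  (b <= size sS)%N -> pp C (cyc R sS b) e = b%:R / (size sS)%:R.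
Proof.
move=> us iS ei priv bs; rewrite pp_cyc; congr (_%:R / _).
rewrite -[RHS](count_window us iS bs); apply: eq_bigr => k _.
congr nat_of_bool; apply/idP/idP.
  case/inCS => j jw ej.
  have jS : j \in sS by have := subsetP (window_sub sS b k) j jw; rewrite inE.
  by rewrite -(priv j jS ej).
by move=> iw; apply/inCS; exists i.
Qed.

Lemma qq_cyc (tT : seq E) b e : uniq tT -> (b <= size tT)%N ->
  qq (cyc R tT b) e = (if e \in tT then b%:R else 0) / (size tT)%:R.
Proof.
move=> ut bs; rewrite /qq cyc_avg -natr_sum; congr (_ / _).
case: ifP => eT; first by rewrite count_window.
rewrite big1 // => k _; case: (boolP (e \in window tT b k)) => // ew.
by have := subsetP (window_sub tT b k) e ew; rewrite inE eT.
Qed.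

Lemma sumq_cyc (tT : seq E) b : uniq tT -> (b <= size tT)%N -> (0 < size tT)%N ->
  \sum_e qq (cyc R tT b) e = b%:R.
Proof.
move=> ut bs tp; rewrite -sizeq cyc_avg.
under eq_bigr do rewrite card_window //.
rewrite sumr_const card_ord -[_ *+ size tT]mulr_natr mulfK // pnatr_eq0 -lt0n //.
Qed.

Lemma real_bound (x b1 b2 m : nat) : (x <= b1)%N -> (x <= m)%N -> (0 < m)%N -> (0 < b1)%N ->
  x%:R * (b2%:R / m%:R) <= (b1 * b2)%:R / (maxn b1 m)%:R :> R.
Proof.
move=> xb xm mp bp; have mR : (m%:R : R) != 0 by rewrite pnatr_eq0 -lt0n.
have bR : (b1%:R : R) != 0 by rewrite pnatr_eq0 -lt0n.
case: (leqP b1 m) => h.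
  rewrite natrM mulrA ler_wpM2r ?invr_ge0 ?ler0n //.
  by rewrite ler_wpM2r ?ler0n // ler_nat.
rewrite natrM mulrAC divff // mul1r.
apply: (@le_trans _ _ (m%:R * (b2%:R / m%:R))).
  by rewrite ler_wpM2r ?divr_ge0 ?ler0n // ler_nat.
by rewrite mulrC divfK.
Qed.

Lemma hh_cyc_le (tT : seq E) b1 b2 (S : {set V}) : uniq tT -> is_packing C [set x in tT] ->
  (b2 <= size tT)%N -> (0 < size tT)%N -> (0 < b1)%N -> (#|S| <= b1)%N ->
  hh C (cyc R tT b2) S <= (b1 * b2)%:R / (maxn b1 (size tT))%:R.
Proof.
move=> ut pk bs tp b1p Sb.
have -> : hh C (cyc R tT b2) S =
    (#|CS C S :&: [set x in tT]|)%:R * (b2%:R / (size tT)%:R).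
  rewrite /hh card_sumR mulr_suml; apply: eq_bigr => e _.
  rewrite qq_cyc // !inE; case: (e \in CS C S); case: (e \in tT);
  by rewrite ?mul1r ?mul0r ?mulr0.
apply: real_bound => //.
- exact: leq_trans (packing_card S pk) Sb.
- rewrite -(card_uniqP ut) -[#|tT|]cardsE; apply: subset_leq_card; exact: subsetIr.
Qed.

End CycG.


Section Hard.
Variable R : realFieldType.
Variables (V E : finType) (C : V -> {set E}).

Lemma sum_in_le (A B : {set E}) (q : E -> R) : A \subset B -> (forall e, 0 <= q e) ->
  \sum_(e in A) q e <= \sum_(e in B) q e.
Proof.
move=> sAB q0; rewrite [X in X <= _]big_mkcond [X in _ <= X]big_mkcond /=.
apply: ler_sum => e _; case: ifP => eA; first by rewrite (subsetP sAB e eA).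
by case: ifP.
Qed.

Lemma fsum (p : E -> R) (T : {set E}) :
  (#|T|)%:R - \sum_e p e * (e \in T)%:R = \sum_(e in T) (1 - p e).
Proof.
rewrite card_sumR -sumrB [RHS]big_mkcond /=; apply: eq_bigr => e _.
by case: (e \in T); rewrite /= ?mulr1 ?mulr0 ?subr0.
Qed.

Lemma sum_eqa (q : E -> R) (a : E) : \sum_e (e == a)%:R * q e = q a.
Proof.
rewrite (bigD1 a) //= eqxx mul1r big1 ?addr0 // => e /negPf ->; by rewrite mul0r.
Qed.

Variables (b1 b2 n : nat).
Hypothesis hmin : forall S, coverb C S -> (n <= #|S|)%N.
Hypothesis b1n : (b1 < n)%N.
Hypothesis b2n : (b2 <= n)%N.
Hypothesis b1p : (0 < b1)%N.
Hypothesis hcov : forall e : E, exists i : V, e \in C i.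

Lemma nash_U1_ge (s1 : {set V} -> R) (s2 : {set E} -> R) :
  Nash C b1 b2 s1 s2 ->
  (b1%:R / n%:R) * \sum_e qq s2 e <= U1 C s1 s2 ->
  (b1 * b2)%:R / n%:R <= U1 C s1 s2.
Proof.
case=> ms1 ms2 N1 N2 Lc.
have np : (0 < n)%N by apply: leq_ltn_trans b1n.
have nR : (n%:R : R) != 0 by rewrite pnatr_eq0 -lt0n.
have s1sum : \sum_S s1 S = 1 by case: ms1.
have s2sum : \sum_T s2 T = 1 by case: ms2.
set p := pp C s1; set q := qq s2.
have p0 : forall e, 0 <= p e by move=> e; apply: pp_ge0 ms1.
have p1 : forall e, p e <= 1 by move=> e; apply: pp_le1 ms1.
have q0 : forall e, 0 <= q e by move=> e; apply: qq_ge0 ms2.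
have q1 : forall e, q e <= 1 by move=> e; apply: qq_le1 ms2.
pose f (T : {set E}) := \sum_(e in T) (1 - p e).
have gdev : forall T Y : {set E}, s2 T != 0 -> (#|Y| <= b2)%N -> f Y <= f T.
  move=> T Y nz hY.
  have := dev (f := fun T => (#|T|)%:R - gg C s1 T) ms2 _ nz hY.
  rewrite /f /gg -!fsum; apply => s' ms'; rewrite -!U2_g //; exact: N2.
have hdev : forall S Y : {set V}, s1 S != 0 -> (#|Y| <= b1)%N -> hh C s2 Y <= hh C s2 S.
  move=> S Y nz hY.
  apply: (dev ms1 _ nz hY) => s' ms'; rewrite -!U1_h; exact: N1.
have [/existsP [T0 /andP [nzT0 T0b]]|noT0] := boolP [exists T, (s2 T != 0) && (#|T| < b2)%N].
  have s10 : forall S, 0 <= s1 S by case: ms1.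
  have H2 : forall e, e \notin T0 -> p e = 1.
    move=> e eT; apply/le_anti; rewrite p1 /=.
    have := gdev T0 (e |: T0) nzT0; rewrite cardsU1 eT add1n => /(_ T0b).
    rewrite /f big_setU1 //= => h; lra.
  have [S0 nzS0] : exists S0, s1 S0 != 0.
    case: (pickP (fun S => s1 S != 0)) => [S0 h|h]; first by exists S0.
    exfalso; move: s1sum; rewrite big1 => [|S _]; last by move/negbFE/eqP: (h S).
    by move/esym/eqP; rewrite oner_eq0.
  have S0b : (#|S0| <= b1)%N by case: ms1 => _ _ /(_ S0 nzS0).
  have [a aS0] : exists a, a \notin CS C S0.
    case: (pickP (fun a => a \notin CS C S0)) => [a h|h]; first by exists a.
    have : coverb C S0 by apply/eqP/setP => e; rewrite inE; move/negbFE: (h e).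
    move/hmin => H; lia.
  have pa : p a < 1.
    have : p a + s1 S0 <= 1.
      rewrite -s1sum /p /pp (bigD1 S0) //= (negPf aS0) mulr0 add0r.
      rewrite [X in _ <= X](bigD1 S0) //= addrC lerD2r.
      apply: ler_sum => S _; apply: ler_piMr => //; by case: (_ \in _).
    have : 0 < s1 S0 by rewrite lt0r nzS0 s10.
    lra.
  have aT0 : a \in T0.
    apply: contraLR pa => h; by rewrite (H2 _ h) ltxx.
  have qa : q a = 1.
    have allT : forall T, s2 T != 0 -> a \in T.
      move=> T nz; apply: contraT => aT.
      have Tb : (#|T| <= b2)%N by case: ms2 => _ _ /(_ T nz).
      case: (ltnP #|T| b2) => hT.
        have := gdev T (a |: T) nz; rewrite cardsU1 aT add1n => /(_ hT).
        rewrite /f big_setU1 //= => h; lra.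
      have [g gT gT0] : exists2 g, g \in T & g \notin T0.
        case: (pickP (fun g => (g \in T) && (g \notin T0))) => [g /andP [h1 h2]|h].
          by exists g.
        have : T \subset T0.
          by apply/subsetP => x xT; move: (h x); rewrite xT /= => /negbFE.
        move/subset_leq_card => H; lia.
      have aTg : a \notin T :\ g by rewrite inE (negPf aT) andbF.
      have hY : (#|a |: (T :\ g)| <= b2)%N.
        by rewrite cardsU1 aTg; move: (cardsD1 g T); rewrite gT; lia.
      have := gdev T _ nz hY.
      rewrite /f big_setU1 //= [X in _ <= X](big_setD1 g gT) /= (H2 _ gT0) => h; lra.
    rewrite /q /qq -[RHS]s2sum; apply: eq_bigr => T _.
    have [->|nz] := eqVneq (s2 T) 0; first by rewrite mul0r.
    by rewrite (allT T nz) mulr1.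
  have [i ai] := hcov a.
  have iS0 : i \notin S0 by apply: contra aS0 => iS; apply/inCS; exists i.
  have h0 : b1%:R <= hh C s2 S0.
    case: (ltnP #|S0| b1) => hS.
      have := hdev S0 (i |: S0) nzS0; rewrite cardsU1 iS0 add1n => /(_ hS).
      have : hh C s2 S0 + q a <= hh C s2 (i |: S0).
        rewrite /hh -[q a]sum_eqa -big_split /=; apply: ler_sum => e _.
        rewrite -mulrDl ler_wpM2r // -natrD ler_nat.
        case: (eqVneq e a) => [->|ne].
          by rewrite (negPf aS0) (_ : a \in CS C (i |: S0)) //; apply/inCS; exists i; rewrite ?setU11.
        rewrite addn0; case: (boolP (e \in CS C S0)) => // /inCS [k kS ek].
        by rewrite (_ : e \in CS C (i |: S0)) //; apply/inCS; exists k; rewrite ?setU1r.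
      lra.
    have S0e : #|S0| = b1 by lia.
    pose Yj j := i |: (S0 :\ j).
    have up : \sum_(j in S0) hh C s2 (Yj j) <= b1%:R * hh C s2 S0.
      apply: (@le_trans _ _ (\sum_(j in S0) hh C s2 S0)).
        apply: ler_sum => j jS; apply: hdev nzS0 _.
        have iSj : i \notin S0 :\ j by rewrite inE (negPf iS0) andbF.
        rewrite cardsU1 iSj add1n; move: (cardsD1 j S0); rewrite jS; lia.
      by rewrite sumr_const S0e mulr_natl.
    have lo : (b1.-1)%:R * hh C s2 S0 + b1%:R * q a <= \sum_(j in S0) hh C s2 (Yj j).
      rewrite /hh -[q a]sum_eqa !mulr_sumr -big_split /= exchange_big /=.
      apply: ler_sum => e _; rewrite -mulr_suml !mulrA -mulrDl ler_wpM2r //.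
      rewrite -!natrM -natrD -natr_sum ler_nat.
      case: (eqVneq e a) => [->|ne].
        rewrite (negPf aS0) muln0 add0n muln1.
        rewrite (eq_bigr (fun=> 1%N)) ?sum1_card ?S0e // => j _.
        by rewrite (_ : a \in CS C (Yj j)) //; apply/inCS; exists i; rewrite ?setU11.
      rewrite muln0 addn0; case: (boolP (e \in CS C S0)) => [/inCS [k kS ek]|]; last by rewrite muln0.
      rewrite muln1 (big_setD1 k kS) /=; apply: leq_trans (leq_addl _ _).
      have cS : #|S0 :\ k| = b1.-1 by move: (cardsD1 k S0); rewrite kS S0e => ->; rewrite add1n.
      rewrite -cS -sum1_card; apply: leq_sum => j; rewrite !inE => /andP [jk jS].
      rewrite (_ : e \in CS C (Yj j)) //; apply/inCS; exists k => //.
      by rewrite /Yj !inE kS andbT [k == j]eq_sym jk orbT.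
    have e1 : (b1%:R : R) = (b1.-1)%:R + 1 by rewrite natr1 prednK.
    have := le_trans lo up.
    by rewrite qa mulr1 [in X in _ <= X]e1 mulrDl mul1r lerD2l.
  have U1h : hh C s2 S0 <= U1 C s1 s2.
    rewrite U1_h; apply: (avg_ge ms1) => S nz; exact: hdev nz S0b.
  apply: le_trans U1h; apply: le_trans h0.
  rewrite natrM ler_pdivrMr ?ltr0n // ler_wpM2l ?ler0n // ler_nat //.
have Qb : \sum_e q e = b2%:R.
  rewrite /q -sizeq -[b2%:R]mul1r -s2sum mulr_suml; apply: eq_bigr => T _.
  have [->|nz] := eqVneq (s2 T) 0; first by rewrite !mul0r.
  have : (#|T| <= b2)%N by case: ms2 => _ _ /(_ T nz).
  have : ~~ (#|T| < b2)%N by move/existsPn: noT0 => /(_ T); rewrite nz.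
  by move=> h1 h2; have -> : #|T| = b2 by lia.
by move: Lc; rewrite Qb natrM mulrAC.
Qed.
End Hard.

Unset Implicit Arguments.

Theorem theorem2 (R : realFieldType) (V E : finType) (C : V -> {set E}) (b1 b2 : nat) :
  (0 < #|V|)%N -> (0 < #|E|)%N -> (forall e : E, exists i : V, e \in C i) ->
  (0 < b1)%N -> (0 < b2)%N -> (b1 < nstar C)%N -> (b2 < mstar C)%N ->
  forall (sS : seq V) (tT : seq E),
    uniq sS -> is_cover C [set x in sS] -> size sS = nstar C ->
    uniq tT -> is_packing C [set x in tT] -> size tT = mstar C ->
  let eps : R := (b1 * b2)%:R * ((maxn b1 (mstar C))%:R^-1 - (nstar C)%:R^-1) in
  let s1c : {set V} -> R := cyc R sS b1 in
  let s2c : {set E} -> R := cyc R tT b2 in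
  [/\ (* (i.a) *) epsNash C b1 b2 eps s1c s2c,
      (* (i.b) *)
      (forall (s1 : {set V} -> R) (s2 : {set E} -> R), Nash C b1 b2 s1 s2 ->
         `|U1 C s1c s2c - U1 C s1 s2| <= eps /\ `|U2 C s1c s2c - U2 C s1 s2| <= eps),
      (* (ii) minimum of the detection rate against the cyclic defence *)
      (forall s2 : {set E} -> R, mixed b2 s2 -> nonempty_support s2 ->
         b1%:R / (nstar C)%:R <= rate C s1c s2) /\
      (exists s2 : {set E} -> R, [/\ mixed b2 s2, nonempty_support s2 &
         rate C s1c s2 = b1%:R / (nstar C)%:R])
    & (* (ii) comparison with Nash equilibria *)
      (forall (s1 : {set V} -> R) (s2 : {set E} -> R), Nash C b1 b2 s1 s2 ->
         (maxn b1 (mstar C))%:R / (nstar C)%:R * rate C s1 s2 <= b1%:R / (nstar C)%:R)].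
Proof.
move=> V0 E0 hcov b1p b2p b1n b2m sS tT us cov Hn ut pk Hm eps s1c s2c.
set n := nstar C in b1n Hn eps *; set m := mstar C in b2m Hm eps *.
have np : (0 < n)%N by lia.
have mp : (0 < m)%N by lia.
have nR : (n%:R : R) != 0 by rewrite pnatr_eq0 -lt0n.
have sSp : (0 < size sS)%N by rewrite Hn.
have tTp : (0 < size tT)%N by rewrite Hm.
have hmin : forall S, coverb C S -> (n <= #|S|)%N by move=> S; apply: nstar_min.
have mn : (m <= n)%N.
  have := packing_card [set x in sS] pk.
  by rewrite cov setTI !cardsE (card_uniqP ut) (card_uniqP us) Hn Hm.
have b2n : (b2 <= n)%N by lia.
have mc1 : mixed b1 s1c by apply: mixed_cyc.
have mc2 : mixed b2 s2c by apply: mixed_cyc.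
pose H : R := (b1 * b2)%:R / (maxn b1 m)%:R.
pose L : R := (b1 * b2)%:R / n%:R.
have epsE : eps = H - L by rewrite /eps /H /L mulrBr.
have pcge : forall e, b1%:R / n%:R <= pp C s1c e.
  by move=> e; rewrite -Hn; apply: pp_cyc_ge => //; rewrite Hn ltnW.
have hc : forall S : {set V}, (#|S| <= b1)%N -> hh C s2c S <= H.
  by move=> S hS; rewrite /H -Hm; apply: hh_cyc_le => //; rewrite Hm ltnW.
have sq2 : \sum_e qq s2c e = b2%:R by apply: sumq_cyc; rewrite ?Hm // ltnW.
have U1_le_H : forall s1, mixed b1 s1 -> U1 C s1 s2c <= H.
  move=> s1 ms; rewrite U1_h; apply: (avg_le ms) => S nz; apply: hc.
  by case: ms => _ _ /(_ S nz).
have U1c_ge : forall s2, mixed b2 s2 -> b1%:R / n%:R * \sum_e qq s2 e <= U1 C s1c s2.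
  move=> s2 ms; rewrite U1_pq mulr_sumr; apply: ler_sum => e _.
  by rewrite ler_wpM2r ?(qq_ge0 e ms) ?pcge.
have rn : b1%:R / n%:R <= 1 :> R.
  by rewrite ler_pdivrMr ?ltr0n // mul1r ler_nat ltnW.
have rn0 : 0 <= b1%:R / n%:R :> R by rewrite divr_ge0 ?ler0n.
have LE : L = b1%:R / n%:R * b2%:R by rewrite /L natrM mulrAC.
have key2 : forall s1 s2, mixed b1 s1 -> mixed b2 s2 ->
    b1%:R / n%:R * \sum_e qq s2 e <= U1 C s1 s2 -> U2 C s1 s2 <= b2%:R - L.
  move=> s1 s2 ms1 ms2 hU; rewrite U2_E; last by case: ms1.
  have := sumq_le ms2; move: hU; rewrite LE.
  set Q := \sum_e _; set r := b1%:R / n%:R; set U := U1 C s1 s2 => h1 h2.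
  have h3 : 0 <= 1 - r by rewrite subr_ge0.
  have h4 : 0 <= b2%:R - Q by rewrite subr_ge0.
  have := mulr_ge0 h3 h4; lra.
have U2c_le : forall s2, mixed b2 s2 -> U2 C s1c s2 <= b2%:R - L.
  by move=> s2 ms; apply: key2 => //; apply: U1c_ge.
have U2_ge : forall s1, mixed b1 s1 -> b2%:R - H <= U2 C s1 s2c.
  move=> s1 ms; rewrite U2_E; last by case: ms.
  by rewrite sq2; have := U1_le_H s1 ms; lra.
have U1cc_ge : L <= U1 C s1c s2c by have := U1c_ge s2c mc2; rewrite sq2 -LE.
have U1cc_le : U1 C s1c s2c <= H by apply: U1_le_H.
have U2cc_ge : b2%:R - H <= U2 C s1c s2c by apply: U2_ge.
have U2cc_le : U2 C s1c s2c <= b2%:R - L by apply: U2c_le.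
split.
- split => //.
  + move=> s1' ms; have := U1_le_H s1' ms; rewrite epsE; lra.
  + move=> s2' ms; have := U2c_le s2' ms; rewrite epsE; lra.
- move=> s1 s2 Nsh; case: (Nsh) => ms1 ms2 N1 N2.
  have v2lb : b2%:R - H <= U2 C s1 s2.
    by apply: le_trans (U2_ge s1 ms1) _; rewrite -[U2 C s1 s2]addr0; apply: N2.
  have Lc : b1%:R / n%:R * \sum_e qq s2 e <= U1 C s1 s2.
    by apply: le_trans (U1c_ge s2 ms2) _; rewrite -[U1 C s1 s2]addr0; apply: N1.
  have U2le : U2 C s1 s2 <= b2%:R - L by apply: key2.
  have U1le : U1 C s1 s2 <= H.
    move: v2lb; rewrite U2_E; last by case: ms1.
    have := sumq_le ms2; lra.
  have U1ge : L <= U1 C s1 s2.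
    by apply: (nash_U1_ge hmin b1n b2n b1p hcov Nsh Lc).
  rewrite epsE; split.
    exact: absB_le.
  apply: le_trans (absB_le U2cc_ge U2cc_le v2lb U2le) _; lra.
- split.
    move=> s2 ms ne; rewrite rate_g; apply: (avg_ge ms) => T nz.
    have Tp : (0 < #|T|)%N by rewrite card_gt0; apply: ne.
    rewrite ler_pdivlMr ?ltr0n // (card_sumR R T) mulr_sumr /gg; apply: ler_sum => e _.
    by rewrite ler_wpM2r ?ler0n ?pcge.
  have [i0 i0S] : exists i0, i0 \in sS.
    by move: sSp; case: (sS) => // x s _; exists x; rewrite inE eqxx.
  have [e0 /andP [e0i0 /forallP priv]] : exists e0,
      (e0 \in C i0) && [forall j, ((j \in sS) && (e0 \in C j)) ==> (j == i0)].
    apply/existsP; apply: contraT => /existsPn Hx.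
    have : coverb C ([set x in sS] :\ i0).
      apply/eqP/setP => e; rewrite inE.
      have : e \in CS C [set x in sS] by rewrite cov inE.
      case/inCS => j; rewrite inE => jS ej.
      case: (eqVneq j i0) => [ji|ji]; last by apply/inCS; exists j; rewrite // !inE ji jS.
      subst j; have := Hx e; rewrite ej /= => /forallPn [k].
      rewrite negb_imply => /andP [/andP [kS ek] ki].
      by apply/inCS; exists k; rewrite // !inE ki kS.
    move/hmin; move: (cardsD1 i0 [set x in sS]); rewrite [i0 \in _]inE i0S.
    rewrite cardsE (card_uniqP us) Hn; lia.
  have privj : forall j, j \in sS -> e0 \in C j -> j = i0.
    by move=> j jS ej; move: (priv j); rewrite jS ej => /eqP.
  exists (fun T => (T == [set e0])%:R); split.
  + split.
    * by move=> T; rewrite ler0n.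
    * by rewrite (bigD1 [set e0]) //= eqxx big1 ?addr0 // => T /negPf ->.
    * by move=> T /=; rewrite pnatr_eq0 eqb0 negbK => /eqP ->; rewrite cards1.
  + by move=> T /=; rewrite pnatr_eq0 eqb0 negbK => /eqP ->; rewrite -card_gt0 cards1.
  + rewrite rate_g (bigD1 [set e0]) //= eqxx big1 ?addr0; last first.
      by move=> T /negPf ->; rewrite mul0r.
    rewrite cards1 divr1 mul1r /gg (bigD1 e0) //= inE eqxx mulr1 big1 ?addr0; last first.
      by move=> e /negPf ne; rewrite inE ne mulr0.
    by rewrite -Hn; apply: (pp_cyc_priv R us i0S e0i0 privj); rewrite Hn ltnW.
- move=> s1 s2 Nsh; case: (Nsh) => ms1 ms2 N1 N2.
  pose r : R := b1%:R / (maxn b1 m)%:R.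
  have MR : ((maxn b1 m)%:R : R) != 0 by rewrite pnatr_eq0 -lt0n; lia.
  have Hr : H = r * b2%:R by rewrite /H /r natrM mulrAC.
  have r0 : 0 <= r by rewrite divr_ge0 ?ler0n.
  have r1 : r <= 1.
    by rewrite ler_pdivrMr ?ltr0n ?mul1r ?ler_nat ?leq_maxl //; lia.
  have v2lb : b2%:R - H <= U2 C s1 s2.
    by apply: le_trans (U2_ge s1 ms1) _; rewrite -[U2 C s1 s2]addr0; apply: N2.
  have s1sum : \sum_S s1 S = 1 by case: ms1.
  have fdev : forall T Y : {set E}, s2 T != 0 -> (#|Y| <= b2)%N ->
      (#|Y|)%:R - gg C s1 Y <= (#|T|)%:R - gg C s1 T.
    move=> T Y nz hY; apply: (dev (f := fun T => (#|T|)%:R - gg C s1 T) ms2 _ nz hY).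
    by move=> s' ms'; rewrite -!U2_g //; apply: N2.
  have rle : rate C s1 s2 <= r.
    rewrite rate_g; apply: (avg_le ms2) => T nz.
    have Tb : (#|T| <= b2)%N by case: ms2 => _ _ /(_ T nz).
    have vT : U2 C s1 s2 <= (#|T|)%:R - gg C s1 T.
      rewrite U2_g //; apply: (avg_le ms2) => X nzX; apply: fdev nz _.
      by case: ms2 => _ _ /(_ X nzX).
    have [T0|Tp] := posnP #|T|; first by rewrite T0 invr0 mulr0.
    rewrite ler_pdivrMr ?ltr0n //.
    have h3 : 0 <= 1 - r by rewrite subr_ge0.
    have h4 : 0 <= b2%:R - (#|T|)%:R :> R by rewrite subr_ge0 ler_nat.
    have := mulr_ge0 h3 h4; move: vT v2lb; rewrite Hr; lra.
  have -> : b1%:R / n%:R = (maxn b1 m)%:R / n%:R * r by rewrite /r; field; rewrite nR MR.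
  by rewrite ler_wpM2l ?divr_ge0 ?ler0n.
Qed.
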